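(* Let $G$ be a transitive permutation group on a finite set $\Omega$ of size $n$, and let $k$ be a positive integer with $k\le\lceil n/2\rceil-1$. Suppose that for every two disjoint subsets $A,B\subseteq\Omega$ of size $k$ there exists $g\in G$ with $A^g=B$. Then $G$ is $k$-homogeneous, i.e. $G$ is transitive on the set of all $k$-subsets of $\Omega$. *)

(* Defs.v *)
From mathcomp Require Import all_boot all_fingroup.
Set Implicit Arguments. Unset Strict Implicit. Unset Printing Implicit Defensive.

Definition ksubsets (T : finType) (k : nat) : {set {set T}} :=
  [set A : {set T} | #|A| == k].

Definition khomogeneous (T : finType) (G : {group {perm T}}) (k : nat) : bool :=
  [transitive G, on ksubsets T k | ('P^*)%act].

(* Main.v *)
Require Import Defs.
From mathcomp Require Import all_boot all_fingroup.
From mathcomp Require Import zify.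

Lemma exists_ksub (T : finType) (D : {set T}) (k : nat) :
  k <= #|D| -> exists2 C : {set T}, C \subset D & #|C| = k.
Proof.
elim: k => [|k IH] Hk; first by exists set0; rewrite ?sub0set ?cards0.
have [C CD Ck] := IH (ltnW Hk).
have : 0 < #|D :\: C| by rewrite cardsD (setIidPr CD) Ck subn_gt0.
case/card_gt0P => x; rewrite inE => /andP [xC xD].
exists (x |: C); first by rewrite subUset sub1set xD CD.
by rewrite cardsU1 xC Ck.
Qed.

Theorem lemma7p5 (T : finType) (G : {group {perm T}}) (k : nat) :
  [transitive G, on [set: T] | 'P] ->
  0 < k -> k <= uphalf #|T| - 1 ->
  (forall A B : {set T}, #|A| = k -> #|B| = k -> [disjoint A & B] ->
     exists2 g, g \in G & [set g x | x in A] = B) ->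
  khomogeneous G k.
Proof.
move=> _ k0 kle H.
have kn : k.*2 < #|T|.
  by rewrite -gtn_uphalf_double; have := uphalf_gt0 #|T|; lia.
pose O A := orbit ('P^*)%act G A.
have disj : forall A B : {set T}, #|A| = k -> #|B| = k -> [disjoint A & B] ->
    B \in O A.
  move=> A B Ak Bk AB; have [g gG <-] := H A B Ak Bk AB.
  apply/orbitP; exists g => //.
have swap : forall A B : {set T}, #|A| = k -> #|B| = k -> #|A :|: B| <= k.+1 ->
    B \in O A.
  move=> A B Ak Bk ABk.
  have : k <= #|~: (A :|: B)|.
    have := cardsC (A :|: B); rewrite -muln2 in kn; lia.
  case/exists_ksub => C CS Ck.
  have dA : [disjoint A & C].
    rewrite disjoint_sym disjoint_subset; apply: (subset_trans CS).
    by apply/subsetP => x; rewrite !inE negb_or => /andP[].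
  have dB : [disjoint B & C].
    rewrite disjoint_sym disjoint_subset; apply: (subset_trans CS).
    by apply/subsetP => x; rewrite !inE negb_or => /andP[].
  apply: (orbit_trans (y := C)); last exact: disj.
  by rewrite orbit_sym; apply: disj.
have main : forall m (A B : {set T}), #|A| = k -> #|B| = k ->
    #|A :\: B| <= m -> B \in O A.
  elim=> [|m IH] A B Ak Bk m1.
    have AB : A \subset B by rewrite -setD_eq0 -cards_eq0; lia.
    have -> : B = A by apply/eqP; rewrite eq_sym eqEcard AB Ak Bk leqnn.
    exact: orbit_refl.
  have [AB|] := eqVneq (A :\: B) set0.
    have AB' : A \subset B by rewrite -setD_eq0 AB.
    have -> : B = A by apply/eqP; rewrite eq_sym eqEcard AB' Ak Bk leqnn.
    exact: orbit_refl.
  case/set0Pn => a; rewrite inE => /andP [aB aA].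
  have cBA : #|B :\: A| = #|A :\: B|.
    have := cardsID B A; have := cardsID A B; rewrite setIC; lia.
  have : 0 < #|B :\: A|.
    by rewrite cBA; apply/card_gt0P; exists a; rewrite inE aB aA.
  case/card_gt0P => b; rewrite inE => /andP [bA bB].
  pose A' := b |: (A :\ a).
  have A'k : #|A'| = k.
    rewrite cardsU1 inE (negbTE bA) andbF /= (cardsD1 a A) aA in Ak *; lia.
  apply: (orbit_trans (y := A')).
    apply: IH => //.
    have -> : A' :\: B = (A :\: B) :\ a.
      apply/setP => x; rewrite !inE.
      case: (eqVneq x b) => [->|]; first by rewrite bB; case: (b != a).
      by case: (x == a); case: (x \in B).
    have := cardsD1 a (A :\: B); rewrite !inE aB aA /=; lia.
  apply: swap => //.
  have sub : A :|: A' \subset b |: A.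
    by rewrite subUset subsetUr /A' setUS // subD1set.
  have := subset_leq_card sub; rewrite cardsU1 bA Ak /=; lia.
rewrite /khomogeneous /atrans.
have kT : k <= #|[set: T]| by rewrite cardsT; rewrite -muln2 in kn; lia.
have [C _ Ck] := (@exists_ksub _ _ _ kT).
apply/imsetP; exists C; first by rewrite inE Ck.
apply/setP => B; rewrite inE; apply/eqP/idP.
  move=> Bk; apply: (main #|C :\: B|) => //; exact/eqP.
case/orbitP => g _ <-.
by rewrite /= card_imset //; apply: perm_inj.
Qed.
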